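(* Let $X\subseteq\mathbb{C}^n$ be a complex analytic set and $\mathcal M\subseteq\mathcal O_X^p$ a sheaf of $\mathcal O_X$-submodules. Then: (1) $\mathcal M_{S_1}$ is an $\mathcal O_X$-submodule of $\mathcal O_X^p$, i.e. for every $x\in X$, $(\mathcal M_{S_1})_x$ is an $\mathcal O_{X,x}$-submodule of $\mathcal O_{X,x}^p$; (2) for every $x\in X$, $\mathcal M_x\subseteq(\mathcal M_{S_1})_x\subseteq\overline{\mathcal M_x}$.
   Context: $X\subseteq\mathbb{C}^n$ is a complex analytic set with coordinates $z_1,\dots,z_n$, and $\pi_1,\pi_2:X\times X\to X$ are the two projections. For $h\in\mathcal O_X^p$ the double of $h$ is $h_D=(h\circ\pi_1,h\circ\pi_2)\in\mathcal O_{X\times X}^{2p}$. The double $\mathcal M_D$ of $\mathcal M\subseteq\mathcal O_X^p$ is the $\mathcal O_{X\times X}$-submodule of $\mathcal O_{X\times X}^{2p}$ generated by $\{h_D: h\in\mathcal M\}$. $\overline N$ denotes the integral closure of a submodule $N$ of a free module over the local ring of an analytic space; by the curve criterion, $h\in\overline N$ at a point iff $\phi^*h\in\phi^*N$ for every analytic curve germ $\phi:(\mathbb C,0)\to$ (space, point). The 1-Lipschitz saturation is $(\mathcal M_{S_1})_x=\{h\in\mathcal O_{X,x}^p: h_D\in\overline{\mathcal M_D}\text{ at }(x,x)\}$. *)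

(* Defs.v *)
From HB Require Import structures.
From mathcomp Require Import all_boot all_order all_algebra.
From mathcomp Require Import reals complex.
Set Implicit Arguments. Unset Strict Implicit. Unset Printing Implicit Defensive.
Import Order.TTheory GRing.Theory Num.Theory.
Local Open Scope ring_scope.
Local Open Scope complex_scope.

Section Analytic.
Variable R : realType.
Local Notation C := (R[i]).

Definition polydisc (I : finType) (a : I -> C) (d : C) (w : I -> C) : Prop :=
  forall i, `|w i - a i| < d.

Definition cdiff_at (I : finType) (f : (I -> C) -> C) (z : I -> C) : Prop :=
  exists c : I -> C, forall e : C, 0 < e -> exists d : C, 0 < d /\
    forall h : I -> C, (forall i, `|h i| < d) ->
      `|f (fun i => z i + h i) - f z - \sum_i c i * h i| <= e * \sum_i `|h i|.

(* f is holomorphic on a neighbourhood of z (a representative of an element of O_{C^I,z}) *)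
Definition holo_near (I : finType) (f : (I -> C) -> C) (z : I -> C) : Prop :=
  exists d : C, 0 < d /\ forall w, polydisc z d w -> cdiff_at f w.

Definition holo_vec_near (I J : finType) (h : (I -> C) -> (J -> C)) (z : I -> C) : Prop :=
  forall j, holo_near (fun w => h w j) z.

Definition holo1_near (f : C -> C) (t0 : C) : Prop :=
  exists d : C, 0 < d /\ forall t, `|t - t0| < d ->
    exists c : C, forall e : C, 0 < e -> exists r : C, 0 < r /\
      forall s : C, `|s| < r -> `|f (t + s) - f t - c * s| <= e * `|s|.

Definition analytic_set (I : finType) (X : (I -> C) -> Prop) : Prop :=
  forall a, X a -> exists d : C, 0 < d /\ exists k : nat, exists g : 'I_k -> (I -> C) -> C,
    (forall j w, polydisc a d w -> cdiff_at (g j) w) /\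
    (forall w, polydisc a d w -> (X w <-> forall j, g j w = 0)).

(* two representatives define the same germ of O_{X,x}^J: they agree on X near x *)
Definition germ_eq (I J : finType) (X : (I -> C) -> Prop) (x : I -> C)
    (h1 h2 : (I -> C) -> (J -> C)) : Prop :=
  exists d : C, 0 < d /\ forall w, polydisc x d w -> X w -> h1 w = h2 w.

(* S (a set of representatives) is an O_{X,x}-submodule of O_{X,x}^J *)
Definition is_submodule (I J : finType) (X : (I -> C) -> Prop) (x : I -> C)
    (S : ((I -> C) -> (J -> C)) -> Prop) : Prop :=
  [/\ forall h, S h -> holo_vec_near h x,
      S (fun _ _ => 0),
      forall h1 h2, S h1 -> S h2 -> S (fun w j => h1 w j + h2 w j),
      forall (a : (I -> C) -> C) h, holo_near a x -> S h -> S (fun w j => a w * h w j)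
    & forall h h', S h -> holo_vec_near h' x -> germ_eq X x h h' -> S h'].

Definition curve_germ (I : finType) (X : (I -> C) -> Prop) (x : I -> C) (phi : C -> I -> C) : Prop :=
  [/\ phi 0 = x,
      forall i, holo1_near (fun t => phi t i) 0
    & exists d : C, 0 < d /\ forall t, `|t| < d -> X (phi t)].

(* integral closure of a submodule N of O_{X,x}^J, defined by the curve criterion:
   h is in the closure iff phi^* h lies in the O_{C,0}-module phi^* N for every curve phi *)
Definition int_closure (I J : finType) (X : (I -> C) -> Prop) (x : I -> C)
    (N : ((I -> C) -> (J -> C)) -> Prop) (h : (I -> C) -> (J -> C)) : Prop :=
  holo_vec_near h x /\
  forall phi, curve_germ X x phi ->
    exists k : nat, exists g : 'I_k -> (I -> C) -> (J -> C), exists a : 'I_k -> C -> C,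
      [/\ forall l, N (g l), forall l, holo1_near (a l) 0
        & exists d : C, 0 < d /\ forall t, `|t| < d ->
            forall j, h (phi t) j = \sum_l a l t * g l (phi t) j].

Definition pr1 (I : finType) (z : (I + I)%type -> C) : I -> C := fun i => z (inl i).
Definition pr2 (I : finType) (z : (I + I)%type -> C) : I -> C := fun i => z (inr i).
Definition pt_pair (I : finType) (x y : I -> C) : (I + I)%type -> C :=
  fun k => match k with inl i => x i | inr i => y i end.
Definition prodX (I : finType) (X : (I -> C) -> Prop) : ((I + I)%type -> C) -> Prop :=
  fun z => X (pr1 z) /\ X (pr2 z).

Definition double (I J : finType) (h : (I -> C) -> (J -> C)) :
    ((I + I)%type -> C) -> ((J + J)%type -> C) :=
  fun z k => match k with inl j => h (pr1 z) j | inr j => h (pr2 z) j end.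

(* stalk at (x,x) of M_D: the O_{XxX,(x,x)}-module generated by the h_D, h in M_x *)
Definition double_mod (I J : finType) (x : I -> C) (Mx : ((I -> C) -> (J -> C)) -> Prop) :
    (((I + I)%type -> C) -> ((J + J)%type -> C)) -> Prop :=
  fun H => exists k : nat, exists b : 'I_k -> ((I + I)%type -> C) -> C,
    exists g : 'I_k -> (I -> C) -> (J -> C),
      [/\ forall l, holo_near (b l) (pt_pair x x), forall l, Mx (g l)
        & H = fun z q => \sum_l b l z * double (g l) z q].

Definition lip_sat (I J : finType) (X : (I -> C) -> Prop) (x : I -> C)
    (Mx : ((I -> C) -> (J -> C)) -> Prop) (h : (I -> C) -> (J -> C)) : Prop :=
  holo_vec_near h x /\
  int_closure (prodX X) (pt_pair x x) (double_mod x Mx) (double h).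

End Analytic.

(* Main.v *)
Require Import Defs.
From HB Require Import structures.
From mathcomp Require Import all_boot all_order all_algebra.
From mathcomp Require Import reals complex ring.
From Stdlib Require Import FunctionalExtensionality.
Set Implicit Arguments. Unset Strict Implicit. Unset Printing Implicit Defensive.
Import Order.TTheory GRing.Theory Num.Theory.
Local Open Scope ring_scope.

Lemma minC {R : realType} {a b : R[i]} : 0 < a -> 0 < b ->
  exists m : R[i], [/\ 0 < m, m <= a & m <= b].
Proof.
move=> a0 b0; case/orP: (real_leVge (gtr0_real a0) (gtr0_real b0)) => h.
  by exists a; rewrite lexx.
by exists b; rewrite lexx.
Qed.

Lemma fin_unif (R : realType) (I : finType) (P : I -> R[i] -> Prop) :
  (forall i r r', 0 < r' -> r' <= r -> P i r -> P i r') ->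
  (forall i, exists r, 0 < r /\ P i r) -> exists r, 0 < r /\ forall i, P i r.
Proof.
move=> mono ex.
suff [r [r0 H]] : exists r, 0 < r /\ forall i, i \in enum I -> P i r.
  by exists r; split=> // i; apply: H; rewrite mem_enum.
elim: (enum I) => [|a s [r [r0 H]]]; first by exists 1; split.
have [ra [ra0 Pa]] := ex a.
have [m [m0 mr mra]] := minC (R:=R) r0 ra0.
exists m; split=> // i; rewrite in_cons => /orP [/eqP->|iis].
  exact: mono Pa.
exact: mono (H i iis).
Qed.

Lemma cdiff_const (R : realType) (I : finType) (k : R[i]) z :
  cdiff_at (fun _ : I -> R[i] => k) z.
Proof.
exists (fun _ => 0) => e e0; exists 1; split=> // h _.
rewrite subrr big1 ?subr0 ?normr0; last by move=> i _; rewrite mul0r.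
by apply: mulr_ge0; [exact: ltW | apply: sumr_ge0 => i _; exact: normr_ge0].
Qed.

Lemma cdiff_add (R : realType) (I : finType) (f g : (I -> R[i]) -> R[i]) z :
  cdiff_at f z -> cdiff_at g z -> cdiff_at (fun w => f w + g w) z.
Proof.
move=> [c Hc] [c' Hc']; exists (fun i => c i + c' i) => e e0.
have e20 : 0 < e / 2 by rewrite divr_gt0.
have [d1 [d10 H1]] := Hc _ e20; have [d2 [d20 H2]] := Hc' _ e20.
have [d [d0 dd1 dd2]] := minC (R:=R) d10 d20.
exists d; split=> // h hd.
have h1 : forall i, `|h i| < d1 by move=> i; exact: lt_le_trans (hd i) dd1.
have h2 : forall i, `|h i| < d2 by move=> i; exact: lt_le_trans (hd i) dd2.
have := H1 h h1; have := H2 h h2.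
set S := \sum_i `|h i|.
have -> : f (fun i => z i + h i) + g (fun i => z i + h i) - (f z + g z) -
     \sum_i (c i + c' i) * h i =
   (f (fun i => z i + h i) - f z - \sum_i c i * h i) +
   (g (fun i => z i + h i) - g z - \sum_i c' i * h i).
  have -> : \sum_i (c i + c' i) * h i = \sum_i c i * h i + \sum_i c' i * h i.
    by rewrite -big_split /=; apply: eq_bigr => i _; rewrite mulrDl.
  ring.
move=> B2 B1; apply: le_trans (ler_normD _ _) _.
have -> : e * S = e / 2 * S + e / 2 * S.
  by rewrite -mulrDl -splitr.
exact: lerD.
Qed.
Lemma sumabs_ge0 {R : realType} {I : finType} (h : I -> R[i]) : 0 <= \sum_i `|h i|.
Proof. by apply: sumr_ge0 => i _; exact: normr_ge0. Qed.

Lemma lin_bound (R : realType) (I : finType) (c h : I -> R[i]) :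
  `|\sum_i c i * h i| <= (\sum_i `|c i|) * \sum_i `|h i|.
Proof.
apply: le_trans (ler_norm_sum _ _ _) _; rewrite mulr_suml.
apply: ler_sum => i _; rewrite normrM; apply: ler_wpM2l; first exact: normr_ge0.
rewrite (bigD1 i) //= lerDl; apply: sumr_ge0 => j _; exact: normr_ge0.
Qed.

Lemma S_bound (R : realType) (I : finType) (h : I -> R[i]) d :
  0 < d -> (forall i, `|h i| < d) -> \sum_i `|h i| <= (#|I|%:R + 1) * d.
Proof.
move=> d0 hd; apply: (@le_trans _ _ (\sum_(i : I) d)).
  by apply: ler_sum => i _; exact: ltW.
rewrite sumr_const mulrDl mul1r -[d *+ _]mulr_natl; apply: ler_wpDr; [exact: ltW | exact: lexx].
Qed.

Lemma lip_diff {R : realType} {I : finType} {c h : I -> R[i]} {D : R[i]} :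
  `|D - \sum_i c i * h i| <= 1 * \sum_i `|h i| ->
  `|D| <= (1 + \sum_i `|c i|) * \sum_i `|h i|.
Proof.
move=> H; have -> : D = (D - \sum_i c i * h i) + \sum_i c i * h i by rewrite subrK.
apply: le_trans (ler_normD _ _) _; rewrite mulrDl; apply: lerD => //.
exact: lin_bound.
Qed.

Lemma cdiff_mul (R : realType) (I : finType) (f g : (I -> R[i]) -> R[i]) z :
  cdiff_at f z -> cdiff_at g z -> cdiff_at (fun w => f w * g w) z.
Proof.
move=> [c Hc] [c' Hc']; exists (fun i => f z * c' i + g z * c i) => e e0.
set F := f z; set G := g z.
set Kf := 1 + \sum_i `|c i|; set Kg := 1 + \sum_i `|c' i|.
set N := #|I|%:R + 1 : R[i].
have Kf0 : 0 < Kf by rewrite ltr_wpDr ?sumabs_ge0.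
have Kg0 : 0 < Kg by rewrite ltr_wpDr ?sumabs_ge0.
have N0 : 0 < N by rewrite ltr_wpDl ?ler0n.
set u := e / 3.
have u0 : 0 < u by rewrite divr_gt0.
set A := 1 + `|F| + `|G|.
have A0 : 0 < A by rewrite /A -addrA ltr_wpDr ?addr_ge0.
set e1 := u / A.
have e10 : 0 < e1 by rewrite divr_gt0.
set d3 := u / (Kf * Kg * N).
have d30 : 0 < d3 by apply: divr_gt0 => //; apply: mulr_gt0 => //; apply: mulr_gt0.
have [df1 [df10 Hf1]] := Hc _ ltr01.
have [dg1 [dg10 Hg1]] := Hc' _ ltr01.
have [df2 [df20 Hf2]] := Hc _ e10.
have [dg2 [dg20 Hg2]] := Hc' _ e10.
have [m1 [m10 m1a m1b]] := minC df10 dg10.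
have [m2 [m20 m2a m2b]] := minC df20 dg20.
have [m3 [m30 m3a m3b]] := minC m10 m20.
have [d [d0 da db]] := minC m30 d30.
exists d; split=> // h hd.
have hl : forall r, d <= r -> forall i, `|h i| < r.
  by move=> r dr i; exact: lt_le_trans (hd i) dr.
set S := \sum_i `|h i|.
have S0 : 0 <= S by exact: sumabs_ge0.
set zh := fun i => z i + h i.
set Lf := \sum_i c i * h i; set Lg := \sum_i c' i * h i.
have Bf1 := Hf1 h (hl _ (le_trans da (le_trans m3a m1a))).
have Bg1 := Hg1 h (hl _ (le_trans da (le_trans m3a m1b))).
have Bf2 := Hf2 h (hl _ (le_trans da (le_trans m3b m2a))).
have Bg2 := Hg2 h (hl _ (le_trans da (le_trans m3b m2b))).
have SN : S <= N * d3 by apply: S_bound => //; exact: hl.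
have Pf := lip_diff Bf1; have Pg := lip_diff Bg1.
rewrite -/Kf -/Kg -/S in Pf Pg.
have -> : f zh * g zh - F * G - \sum_i (F * c' i + G * c i) * h i =
   (f zh - F - Lf) * G + F * (g zh - G - Lg) + (f zh - F) * (g zh - G).
  have -> : \sum_i (F * c' i + G * c i) * h i = F * Lg + G * Lf.
    rewrite /Lf /Lg !mulr_sumr -big_split /=; apply: eq_bigr => i _; ring.
  ring.
apply: le_trans (ler_normD _ _) _; apply: le_trans (lerD (ler_normD _ _) (lexx _)) _.
rewrite !normrM.
have T1 : `|f zh - F - Lf| * `|G| + `|F| * `|g zh - G - Lg| <= u * S.
  apply: (@le_trans _ _ (e1 * S * `|G| + `|F| * (e1 * S))).
    apply: lerD; first by apply: ler_wpM2r => //; exact: normr_ge0.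
    by apply: ler_wpM2l => //; exact: normr_ge0.
  have -> : e1 * S * `|G| + `|F| * (e1 * S) = e1 * (`|F| + `|G|) * S by ring.
  apply: ler_wpM2r => //.
  rewrite /e1 mulrAC ler_pdivrMr // ler_wpM2l ?ltW //.
  by rewrite /A -addrA ?ltrDr ?lerDr ?ltr01 ?ler01.
have T2 : `|f zh - F| * `|g zh - G| <= u * S.
  apply: (@le_trans _ _ (Kf * S * (Kg * S))).
    by apply: ler_pM => //; exact: normr_ge0.
  have -> : Kf * S * (Kg * S) = (Kf * Kg * S) * S by ring.
  apply: ler_wpM2r => //.
  have -> : u = Kf * Kg * (N * d3).
    rewrite /d3; field; rewrite !gt_eqF // ?mulr_gt0 //.
  by apply: ler_wpM2l => //; rewrite mulr_ge0 ?ltW.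
apply: le_trans (lerD T1 T2) _.
rewrite -mulrDl; apply: ler_wpM2r => //.
have -> : e = u *+ 3 by rewrite /u -mulr_natr mulrAC -mulrA divff ?mulr1 // pnatr_eq0.
by rewrite !mulrS mulr0n addr0 addrA lerDl ltW.
Qed.

Lemma cdiff_comp (R : realType) (I I' : finType) (s : I -> I')
    (f : (I -> R[i]) -> R[i]) (z : I' -> R[i]) :
  cdiff_at f (fun i => z (s i)) -> cdiff_at (fun w => f (fun i => w (s i))) z.
Proof.
move=> [c Hc]; exists (fun j => \sum_(i | s i == j) c i) => e e0.
set N := #|I|%:R + 1 : R[i].
have N0 : 0 < N by rewrite ltr_wpDl ?ler0n.
have [d [d0 Hd]] := Hc (e / N) (divr_gt0 e0 N0).
exists d; split=> // h hd.
have := Hd (fun i => h (s i)) (fun i => hd (s i)).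
have -> : \sum_j (\sum_(i | s i == j) c i) * h j = \sum_i c i * h (s i).
  rewrite [RHS](partition_big s xpredT) //=; apply: eq_bigr => j _.
  by rewrite mulr_suml; apply: eq_bigr => i /eqP ->.
move/le_trans; apply.
have S0 := sumabs_ge0 h.
apply: (@le_trans _ _ (e / N * (N * \sum_j `|h j|))).
  apply: ler_wpM2l; first by rewrite ltW // divr_gt0.
  apply: (@le_trans _ _ (\sum_(i : I) \sum_j `|h j|)).
    apply: ler_sum => i _; rewrite (bigD1 (s i)) //= lerDl.
    by apply: sumr_ge0 => j _; exact: normr_ge0.
  rewrite sumr_const -[_ *+ _]mulr_natl; apply: ler_wpM2r => //.
  by rewrite /N lerDl ler01.
by rewrite mulrA divfK ?gt_eqF.
Qed.

Lemma holo_add (R : realType) (I : finType) (f g : (I -> R[i]) -> R[i]) z :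
  holo_near f z -> holo_near g z -> holo_near (fun w => f w + g w) z.
Proof.
move=> [d1 [d10 H1]] [d2 [d20 H2]].
have [d [d0 da db]] := minC d10 d20.
exists d; split=> // w wd; apply: cdiff_add.
  by apply: H1 => i; exact: lt_le_trans (wd i) da.
by apply: H2 => i; exact: lt_le_trans (wd i) db.
Qed.

Lemma holo_mul (R : realType) (I : finType) (f g : (I -> R[i]) -> R[i]) z :
  holo_near f z -> holo_near g z -> holo_near (fun w => f w * g w) z.
Proof.
move=> [d1 [d10 H1]] [d2 [d20 H2]].
have [d [d0 da db]] := minC d10 d20.
exists d; split=> // w wd; apply: cdiff_mul.
  by apply: H1 => i; exact: lt_le_trans (wd i) da.
by apply: H2 => i; exact: lt_le_trans (wd i) db.
Qed.

Lemma holo_const (R : realType) (I : finType) (k : R[i]) z :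
  holo_near (fun _ : I -> R[i] => k) z.
Proof. by exists 1; split=> // w _; exact: cdiff_const. Qed.

Lemma holo_comp (R : realType) (I I' : finType) (s : I -> I')
    (f : (I -> R[i]) -> R[i]) (z : I' -> R[i]) :
  holo_near f (fun i => z (s i)) -> holo_near (fun w => f (fun i => w (s i))) z.
Proof.
move=> [d [d0 H]]; exists d; split=> // w wd; apply: cdiff_comp; apply: H.
by move=> i; exact: wd.
Qed.

Lemma holo1_const (R : realType) (k : R[i]) : holo1_near (fun _ => k) 0.
Proof.
exists 1; split=> // t _; exists 0 => e e0; exists 1; split=> // s _.
by rewrite /= subrr mul0r subr0 normr0; apply: mulr_ge0; [exact: ltW | exact: normr_ge0].
Qed.

Definition rep (R : realType) (A J : Type) (N : (A -> J -> R[i]) -> Prop)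
    (phi : R[i] -> A) (F : R[i] -> J -> R[i]) : Prop :=
  exists k : nat, exists g : 'I_k -> A -> J -> R[i], exists a : 'I_k -> R[i] -> R[i],
    [/\ forall l, N (g l), forall l, holo1_near (a l) 0
      & exists d : R[i], 0 < d /\ forall t, `|t| < d ->
          forall j, F t j = \sum_l a l t * g l (phi t) j].

Lemma rep_zero (R : realType) (A J : Type) N (phi : R[i] -> A) :
  rep N phi (fun _ (_ : J) => 0).
Proof.
exists 0%N, (fun _ _ _ => 0), (fun _ _ => 0); split; try by case.
by exists 1; split=> // t _ j; rewrite big_ord0.
Qed.

Lemma rep_gen (R : realType) (A J : Type) (N : (A -> J -> R[i]) -> Prop) phi g :
  N g -> rep N phi (fun t => g (phi t)).
Proof.
move=> Ng; exists 1%N, (fun _ => g), (fun _ _ => 1); split=> //.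
  by move=> _; exact: holo1_const.
by exists 1; split=> // t _ j; rewrite big_ord1 mul1r.
Qed.

Lemma rep_ext (R : realType) (A J : Type) (N : (A -> J -> R[i]) -> Prop) phi F G :
  rep N phi F ->
  (exists d : R[i], 0 < d /\ forall t, `|t| < d -> forall j, G t j = F t j) ->
  rep N phi G.
Proof.
move=> [k [g [a [Ng Ha [d1 [d10 H1]]]]]] [d2 [d20 H2]].
exists k, g, a; split=> //.
have [d [d0 da db]] := minC d10 d20.
exists d; split=> // t td j.
rewrite H2; last exact: lt_le_trans td db.
by rewrite H1 //; exact: lt_le_trans td da.
Qed.

Lemma rep_add (R : realType) (A J : Type) (N : (A -> J -> R[i]) -> Prop) phi F1 F2 :
  rep N phi F1 -> rep N phi F2 -> rep N phi (fun t j => F1 t j + F2 t j).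
Proof.
move=> [k1 [g1 [a1 [Ng1 Ha1 [d1 [d10 H1]]]]]] [k2 [g2 [a2 [Ng2 Ha2 [d2 [d20 H2]]]]]].
exists (k1 + k2)%N,
  (fun l => match split l with inl l1 => g1 l1 | inr l2 => g2 l2 end),
  (fun l => match split l with inl l1 => a1 l1 | inr l2 => a2 l2 end).
split.
- by move=> l; case: (split l).
- by move=> l; case: (split l).
have [d [d0 da db]] := minC d10 d20.
exists d; split=> // t td j.
rewrite big_split_ord /=.
have sl : forall l, split (lshift k2 l) = inl l := fun l => unsplitK (inl l).
have sr : forall l, split (rshift k1 l) = inr l := fun l => unsplitK (inr l).
rewrite H1 ?H2; [|exact: lt_le_trans td db|exact: lt_le_trans td da].
by congr (_ + _); apply: eq_bigr => l _; rewrite ?sl ?sr.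
Qed.

Lemma rep_map (R : realType) (A J A' J' : Type) (N : (A -> J -> R[i]) -> Prop)
    (N' : (A' -> J' -> R[i]) -> Prop) psi phi F T
    (L : R[i] -> (J -> R[i]) -> J' -> R[i]) :
  (forall g, N g -> N' (T g)) ->
  (forall g t q, T g (phi t) q = L t (g (psi t)) q) ->
  (forall t k (a : 'I_k -> R[i]) (v : 'I_k -> J -> R[i]) q,
     L t (fun j => \sum_l a l * v l j) q = \sum_l a l * L t (v l) q) ->
  rep N psi F -> rep N' phi (fun t => L t (F t)).
Proof.
move=> NT TL Llin [k [g [a [Ng Ha [d [d0 H]]]]]].
exists k, (fun l => T (g l)), a; split=> //.
- by move=> l; exact: NT.
exists d; split=> // t td q.
have -> : F t = fun j => \sum_l a l t * g l (psi t) j.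
  by apply: functional_extensionality => j; exact: H.
rewrite Llin; apply: eq_bigr => l _; by rewrite TL.
Qed.

Lemma curve_cont (R : realType) (I : finType) (Y : (I -> R[i]) -> Prop) y phi :
  curve_germ Y y phi -> forall d : R[i], 0 < d ->
  exists r : R[i], 0 < r /\ forall t, `|t| < r -> polydisc y d (phi t).
Proof.
move=> [phi0 Hh _] d d0.
suff [r [r0 H]] : exists r : R[i], 0 < r /\ forall k, forall t, `|t| < r -> `|phi t k - y k| < d.
  by exists r; split=> // t tr k; exact: H.
apply: (@fin_unif R I (fun k r => forall t, `|t| < r -> `|phi t k - y k| < d)).
  by move=> k r r' _ rr H t tr; apply: H; exact: lt_le_trans tr rr.
move=> k; have [d1 [d10 H1]] := Hh k.
have [c Hc] := H1 0 ltac:(by rewrite subrr normr0).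
have [r [r0 Hr]] := Hc 1 ltr01.
have c1 : 0 < 1 + `|c| by rewrite ltr_wpDr.
have [m [m0 mr md]] := minC r0 (divr_gt0 d0 c1).
exists m; split=> // t tm.
have := Hr t (lt_le_trans tm mr); rewrite add0r mul1r phi0 => B.
have -> : phi t k - y k = (phi t k - y k - c * t) + c * t by rewrite subrK.
apply: le_lt_trans (ler_normD _ _) _; rewrite normrM.
apply: le_lt_trans (lerD B (lexx _)) _.
rewrite -[X in X + _]mul1r -mulrDl mulrC -ltr_pdivlMr //.
exact: lt_le_trans tm md.
Qed.

Lemma holo_neg (R : realType) (I : finType) (f : (I -> R[i]) -> R[i]) z :
  holo_near f z -> holo_near (fun w => - f w) z.
Proof.
move=> H; have -> : (fun w => - f w) = (fun w => (fun _ => -1) w * f w).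
  by apply: functional_extensionality => w; rewrite mulN1r.
by apply: holo_mul => //; exact: holo_const.
Qed.

Lemma holo_double (R : realType) (I J : finType) (h : (I -> R[i]) -> J -> R[i]) (x : I -> R[i]) :
  holo_vec_near h x -> holo_vec_near (Defs.double h) (pt_pair x x).
Proof.
move=> H [j|j].
  exact: (@holo_comp R I (I + I)%type inl (fun w => h w j) (pt_pair x x) (H j)).
exact: (@holo_comp R I (I + I)%type inr (fun w => h w j) (pt_pair x x) (H j)).
Qed.

Definition dg (I : finType) (k : (I + I)%type) : I :=
  match k with inl i => i | inr i => i end.

Lemma pt_pair_dg (R : realType) (I : finType) (w : I -> R[i]) :
  pt_pair w w = (fun k => w (dg k)).
Proof. by apply: functional_extensionality => -[]. Qed.

Lemma holo_diag (R : realType) (I : finType) (b : ((I + I)%type -> R[i]) -> R[i]) x :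
  holo_near b (pt_pair x x) -> holo_near (fun w => b (pt_pair w w)) x.
Proof.
move=> H; have -> : (fun w => b (pt_pair w w)) = (fun w => b (fun k => w (dg k))).
  by apply: functional_extensionality => w; rewrite pt_pair_dg.
by apply: holo_comp; rewrite -pt_pair_dg.
Qed.

Lemma msum (R : realType) (I J : finType) (X : (I -> R[i]) -> Prop) x
    (Mx : ((I -> R[i]) -> J -> R[i]) -> Prop) :
  is_submodule X x Mx -> forall k (b : 'I_k -> (I -> R[i]) -> R[i])
    (g : 'I_k -> (I -> R[i]) -> J -> R[i]),
  (forall l, holo_near (b l) x) -> (forall l, Mx (g l)) ->
  Mx (fun w j => \sum_l b l w * g l w j).
Proof.
move=> [_ M0 MD MM _]; elim=> [|k IH] b g Hb Hg.
  have -> : (fun w j => \sum_(l < 0) b l w * g l w j) = (fun _ _ => 0) by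
    apply: functional_extensionality => w; apply: functional_extensionality => j;
    rewrite big_ord0.
  exact: M0.
have -> : (fun w j => \sum_(l < k.+1) b l w * g l w j) =
   (fun w j => (\sum_(l < k) b (widen_ord (leqnSn k) l) w * g (widen_ord (leqnSn k) l) w j)
        + b ord_max w * g ord_max w j).
  apply: functional_extensionality => w; apply: functional_extensionality => j.
  by rewrite big_ord_recr.
apply: (MD (fun w j => \sum_(l < k) b (widen_ord (leqnSn k) l) w * g (widen_ord (leqnSn k) l) w j)
           (fun w j => b ord_max w * g ord_max w j)).
  by apply: IH => l.
exact: MM.
Qed.

Lemma curve_diag (R : realType) (I : finType) (X : (I -> R[i]) -> Prop) x phi :
  curve_germ X x phi ->
  curve_germ (prodX X) (pt_pair x x) (fun t => pt_pair (phi t) (phi t)).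
Proof.
move=> [phi0 Hh [d [d0 Hd]]]; split.
- by rewrite phi0.
- by case=> i; exact: Hh.
- by exists d; split=> // t td; split; exact: Hd.
Qed.

Lemma curve_pr2 (R : realType) (I : finType) (X : (I -> R[i]) -> Prop) x phi :
  curve_germ (prodX X) (pt_pair x x) phi ->
  curve_germ X x (fun t => pr2 (phi t)).
Proof.
move=> [phi0 Hh [d [d0 Hd]]]; split.
- by rewrite phi0.
- by move=> i; exact: (Hh (inr i)).
- by exists d; split=> // t td; case: (Hd t td).
Qed.

Section Main.
Variables (R : realType) (I J : finType) (X : (I -> R[i]) -> Prop) (x : I -> R[i])
  (Mx : ((I -> R[i]) -> J -> R[i]) -> Prop).
Hypothesis sub : is_submodule X x Mx.

Lemma lipsat_int h : lip_sat X x Mx h -> int_closure X x Mx h.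
Proof.
move=> [hh [_ Hc]]; split=> // phi cphi.
have Hr : rep (double_mod x Mx) (fun t => pt_pair (phi t) (phi t))
            (fun t => Defs.double h (pt_pair (phi t) (phi t))) := Hc _ (curve_diag cphi).
change (rep Mx phi (fun t j => Defs.double h (pt_pair (phi t) (phi t)) (inl j))).
apply: (@rep_map R _ _ _ _ (double_mod x Mx) Mx _ phi _
          (fun G w j => G (pt_pair w w) (inl j)) (fun t v j => v (inl j)) _ _ _ Hr) => //.
move=> G [k [b [g [Hb Hg ->]]]].
apply: (@msum R I J X x Mx sub k (fun l w => b l (pt_pair w w)) g) => // l.
exact: holo_diag.
Qed.

Lemma M_lipsat h : Mx h -> lip_sat X x Mx h.
Proof.
have [Hh _ _ _ _] := sub; move=> Mh; split; first exact: Hh.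
split; first exact: holo_double (Hh _ Mh).
move=> phi cphi.
set G := fun z q => \sum_(l < 1) (fun _ _ => 1) l z * Defs.double ((fun _ => h) l) z q.
change (rep (double_mod x Mx) phi (fun t => Defs.double h (phi t))).
apply: (@rep_ext R _ _ _ _ (fun t => G (phi t))).
  apply: rep_gen; exists 1%N, (fun _ _ => 1), (fun _ => h); split=> //.
  by move=> _; exact: holo_const.
by exists 1; split=> // t _ q; rewrite /G big_ord1 mul1r.
Qed.

Lemma lip_zero : lip_sat X x Mx (fun _ _ => 0).
Proof.
have hz : holo_vec_near (fun (_ : I -> R[i]) (_ : J) => (0 : R[i])) x.
  by move=> j; exact: holo_const.
split=> //; split; first exact: holo_double hz.
move=> phi _; apply: (@rep_ext R _ _ _ _ (fun _ _ => 0)); first exact: rep_zero.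
by exists 1; split=> // t _ [].
Qed.

Lemma lip_add h1 h2 : lip_sat X x Mx h1 -> lip_sat X x Mx h2 ->
  lip_sat X x Mx (fun w j => h1 w j + h2 w j).
Proof.
move=> [H1 [_ C1]] [H2 [_ C2]].
have hs : holo_vec_near (fun w j => h1 w j + h2 w j) x.
  by move=> j; exact: holo_add.
split=> //; split; first exact: holo_double hs.
move=> phi cphi.
apply: (@rep_ext R _ _ _ _ _ _ (rep_add (C1 _ cphi) (C2 _ cphi))).
by exists 1; split=> // t _ [].
Qed.

Lemma lip_mul (a : (I -> R[i]) -> R[i]) h : holo_near a x -> lip_sat X x Mx h ->
  lip_sat X x Mx (fun w j => a w * h w j).
Proof.
move=> Ha hl; have hl' := hl; move: hl' => [Hh [_ Ch]].
have [_ _ _ MM _] := sub.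
have hs : holo_vec_near (fun w j => a w * h w j) x.
  by move=> j; exact: holo_mul.
split=> //; split; first exact: holo_double hs.
move=> phi cphi.
have Hpr1 : holo_near (fun z : (I + I)%type -> R[i] => a (pr1 z)) (pt_pair x x).
  exact: (@holo_comp R I (I + I)%type inl a (pt_pair x x) Ha).
have R1 := @rep_map R _ _ _ _ (double_mod x Mx) (double_mod x Mx) phi phi _
   (fun G z q => a (pr1 z) * G z q) (fun t v q => a (pr1 (phi t)) * v q)
   ltac:(move=> G [k [b [g [Hb Hg ->]]]];
         exists k, (fun l z => a (pr1 z) * b l z), g; split=> //;
         [ by move=> l; exact: holo_mul
         | apply: functional_extensionality => z; apply: functional_extensionality => q;
           rewrite /= mulr_sumr; apply: eq_bigr => l _; by rewrite mulrA ])
   ltac:(by [])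
   ltac:(by move=> t k b v q /=; rewrite mulr_sumr; apply: eq_bigr => l _; rewrite mulrCA)
   (Ch _ cphi).
have Hi := (lipsat_int hl).2 _ (curve_pr2 cphi).
set L2 := fun t (v : J -> R[i]) (q : (J + J)%type) =>
  match q with inl _ => 0 | inr j => (a (pr2 (phi t)) - a (pr1 (phi t))) * v j end.
set E := fun (g : (I -> R[i]) -> J -> R[i]) (z : (I + I)%type -> R[i]) (q : (J + J)%type) =>
  \sum_(l < 2) (fun (l : 'I_2) (z : (I + I)%type -> R[i]) =>
                  if val l == 0%N then 1 else - a (pr1 z)) l z *
   Defs.double ((fun l : 'I_2 => if val l == 0%N then (fun w j => a w * g w j) else g) l) z q.
have R2 := @rep_map R _ _ _ _ Mx (double_mod x Mx) (fun t => pr2 (phi t)) phi _ E L2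
   ltac:(move=> g Mg; exists 2%N,
           (fun (l : 'I_2) (z : (I + I)%type -> R[i]) => if val l == 0%N then 1 else - a (pr1 z)),
           (fun l : 'I_2 => if val l == 0%N then (fun w j => a w * g w j) else g);
         split=> //;
         [ move=> l; case: (val l == 0%N); [exact: holo_const | exact: holo_neg]
         | move=> l; case: (val l == 0%N); [exact: MM | exact: Mg] ])
   ltac:(by move=> g t [j|j]; rewrite /E /L2 !big_ord_recl big_ord0 /=; ring)
   ltac:(move=> t k b v [j|j]; rewrite /L2;
         [ by rewrite big1 // => l _; rewrite mulr0
         | by rewrite mulr_sumr; apply: eq_bigr => l _; rewrite mulrCA ])
   Hi.
apply: (@rep_ext R _ _ _ _ _ _ (rep_add R1 R2)).
by exists 1; split=> // t _ [j|j]; rewrite /L2 /=; ring.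
Qed.

Lemma lip_germ h h' : lip_sat X x Mx h -> holo_vec_near h' x -> germ_eq X x h h' ->
  lip_sat X x Mx h'.
Proof.
move=> [Hh [_ Ch]] H' [d0 [d00 Hg]].
split=> //; split; first exact: holo_double H'.
move=> phi cphi.
apply: (@rep_ext R _ _ _ _ _ _ (Ch _ cphi)).
have [r [r0 Hr]] := curve_cont cphi d00.
have cphi' := cphi; case: cphi' => [_ _ [dX [dX0 HX]]].
have [m [m0 mr mX]] := minC r0 dX0.
exists m; split=> // t tm.
have pd := Hr t (lt_le_trans tm mr).
have [X1 X2] := HX t (lt_le_trans tm mX).
case=> j /=.
  by rewrite (Hg (pr1 (phi t))) // => i; exact: (pd (inl i)).
by rewrite (Hg (pr2 (phi t))) // => i; exact: (pd (inr i)).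
Qed.

End Main.

Theorem mainTheorem1 (R : realType) (n p : nat)
    (X : ('I_n -> R[i]) -> Prop)
    (M : ('I_n -> R[i]) -> ((('I_n -> R[i]) -> ('I_p -> R[i])) -> Prop)) :
  analytic_set X ->
  (forall x, X x -> is_submodule X x (M x)) ->
  forall x, X x ->
    is_submodule X x (lip_sat X x (M x)) /\
    (forall h, M x h -> lip_sat X x (M x) h) /\
    (forall h, lip_sat X x (M x) h -> int_closure X x (M x) h).
Proof.
move=> _ Msub x Xx; have sub := Msub x Xx.
split; last split.
- split.
  + by move=> h [].
  + exact: lip_zero.
  + by move=> h1 h2; exact: lip_add.
  + by move=> a h; exact: lip_mul.
  + by move=> h h'; exact: lip_germ.
- by move=> h; exact: M_lipsat.
- by move=> h; exact: lipsat_int.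
Qed.
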